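(* Let $n\geq 2$ and let $C$ be a $2$-null CRC in $G_n$ with covering radius $\rho\geq 2$, $c_1\leq 2$, $c_2\geq 3$, and $\mathbf{0}\in C$. Then every word of type $1100$ lying in $C_2$ belongs to the interval graph $I(y)$ of some word $y\in C$ of weight four.
   Context: $G_n$ is the graph with vertex set $\mathbb{Z}^n$, $x\sim y$ iff $\sum_i|x_i-y_i|=1$; $d$ is its graph distance, weight of $x$ is $d(x,\mathbf{0})$. For a code $C$ with covering radius $\rho$, $C_i=\{v:d(v,C)=i\}$. $C$ is a CRC if for all $i,j$ every vertex of $C_i$ has the same number $\alpha_{ij}$ of neighbours in $C_j$, with $\alpha_{ij}=0$ for $|i-j|>1$; $a_i=\alpha_{ii}$, $b_i=\alpha_{i,i+1}$, $c_i=\alpha_{i,i-1}$. $C$ is $r$-null if $a_0=\cdots=a_{r-1}=0$. The type of a word of weight at most four is the nonincreasing sequence of its four largest absolute entry values; type $1100$ means exactly two entries $\pm1$, rest $0$. For a vertex $y$, the interval graph $I(y)$ is the subgraph of $G_n$ induced by $\{z: d(\mathbf{0},z)+d(z,y)=d(\mathbf{0},y)\}$. *)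

(* Defs.v *)
From mathcomp Require Import all_boot all_order all_algebra.
Set Implicit Arguments. Unset Strict Implicit. Unset Printing Implicit Defensive.
Import Order.TTheory GRing.Theory Num.Theory.

Definition vert (n : nat) := {ffun 'I_n -> int}.

Definition zero_word (n : nat) : vert n := [ffun => 0%R].

Definition dist n (x y : vert n) : nat := (\sum_(i < n) absz (x i - y i)%R)%N.

Definition weight n (x : vert n) : nat := dist x (zero_word n).

(* the 2n neighbours of v, indexed by (coordinate, sign) *)
Definition nb n (v : vert n) (p : 'I_n * bool) : vert n :=
  [ffun i => if i == p.1 then (if p.2 then v i + 1 else v i - 1)%R else v i].

Definition code n := vert n -> Prop.

Definition inC n (C : code n) (i : nat) (v : vert n) : Prop :=
  (exists c, C c /\ dist v c = i) /\ (forall c, C c -> (i <= dist v c)%N).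

Definition covering_radius n (C : code n) (rho : nat) : Prop :=
  (forall v, exists i, (i <= rho)%N /\ inC C i v) /\ (exists v, inC C rho v).

Definition nb_count n (C : code n) (j : nat) (v : vert n) (k : nat) : Prop :=
  exists S : {set 'I_n * bool}, #|S| = k /\ (forall p, p \in S <-> inC C j (nb v p)).

Definition is_CRC n (C : code n) (rho : nat) (alpha : nat -> nat -> nat) : Prop :=
  (forall i j, (i <= rho)%N -> (j <= rho)%N ->
     forall v, inC C i v -> nb_count C j v (alpha i j)) /\
  (forall i j, (i <= rho)%N -> (j <= rho)%N -> (j.+1 < i \/ i.+1 < j)%N -> alpha i j = 0%N).

Definition a_ (alpha : nat -> nat -> nat) i := alpha i i.
Definition b_ (alpha : nat -> nat -> nat) i := alpha i i.+1.
Definition c_ (alpha : nat -> nat -> nat) i := alpha i i.-1.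

Definition r_null (alpha : nat -> nat -> nat) (r : nat) : Prop :=
  forall i, (i < r)%N -> a_ alpha i = 0%N.

Definition type1100 n (x : vert n) : Prop :=
  exists i j : 'I_n, i != j /\ absz (x i) = 1%N /\ absz (x j) = 1%N /\
    (forall k, k != i -> k != j -> x k = 0%R).

Definition in_interval n (y z : vert n) : Prop :=
  (dist (zero_word n) z + dist z y)%N = dist (zero_word n) y.

(* Main.v *)
Require Import Defs.
From mathcomp Require Import all_boot all_order all_algebra.
From mathcomp Require Import zify.
Set Implicit Arguments. Unset Strict Implicit. Unset Printing Implicit Defensive.
Import Order.TTheory GRing.Theory Num.Theory.

Section Aux.
Variable n : nat.
Implicit Types v w u : vert n.

Definition sg (b : bool) : int := if b then 1%R else (-1)%R.

Lemma nbE v k s m : nb v (k, s) m = if m == k then (v m + sg s)%R else v m.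
Proof. by rewrite ffunE /=; case: s. Qed.

Lemma dist_refl v : dist v v = 0.
Proof. by rewrite /dist big1 // => m _; rewrite subrr. Qed.

Lemma dist_sym v w : dist v w = dist w v.
Proof. by apply: eq_bigr => m _; lia. Qed.

Lemma dist_tri u v w : (dist u w <= dist u v + dist v w)%N.
Proof. rewrite /dist -big_split /=; apply: leq_sum => m _; lia. Qed.

Lemma dist0 v w : dist v w = 0 -> v = w.
Proof.
move/eqP; rewrite sum_nat_eq0 => /forallP H; apply/ffunP => m.
move: (H m) => /= /eqP; lia.
Qed.

Lemma dist_nb v k s : dist v (nb v (k, s)) = 1.
Proof.
rewrite /dist (bigD1 k) //= big1 => [|m /negbTE hm]; rewrite nbE ?eqxx ?hm.
  by case: s => /=; lia.
lia.
Qed.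

Lemma weight_nb v k s :
  (weight (nb v (k, s)) + absz (v k) = weight v + absz (v k + sg s)%R)%N.
Proof.
rewrite /weight /dist (bigD1 k) //= [in RHS](bigD1 k) //= nbE eqxx !ffunE.
rewrite (eq_bigr (fun m => absz (v m - zero_word n m))) => [|m /negbTE hm]; last by rewrite nbE hm.
rewrite !subr0 [in LHS]addnAC [in RHS]addnAC; congr (_ + _); lia.
Qed.

Lemma weight2 v i j : i != j -> (forall l, l != i -> l != j -> v l = 0%R) ->
  weight v = (absz (v i) + absz (v j))%N.
Proof.
move=> hij hk; rewrite /weight /dist (bigD1 i) //= (bigD1 j) /=; last by rewrite eq_sym.
rewrite big1 => [|m /andP [hmi hmj]]; rewrite !ffunE; last by rewrite hk.
lia.
Qed.

Lemma inC0 (C : code n) v : inC C 0 v <-> C v.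
Proof.
split=> [[[c [hc /dist0 ->]] _] //|hv]; split=> //; by exists v; rewrite dist_refl.
Qed.

End Aux.

Definition sgo (b : bool) : int := if b then (-1)%R else 1%R.

Lemma analyze n (x : vert n) (i j : 'I_n) (bi bj : bool) (k : 'I_n) (s : bool) (m : 'I_n) (t : bool) :
 i != j -> x i = sgo bi -> x j = sgo bj -> (forall l, l != i -> l != j -> x l = 0%R) ->
 ~ (k = i /\ s = bi) -> ~ (k = j /\ s = bj) ->
 nb (nb x (k,s)) (m,t) <> x ->
 weight (nb (nb x (k,s)) (m,t)) = 4 \/ ((m = i /\ t = bi) \/ (m = j /\ t = bj)) /\ k <> m.
Proof.
move=> hij hxi hxj hk hpi hpj hne.
have w2 : weight x = 2 by rewrite (weight2 hij hk) hxi hxj; rewrite /sgo; do 2 case: ifP.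
have Wz : (weight (nb x (k,s)) + absz (x k) = weight x + absz (x k + sg s)%R)%N := weight_nb x k s.
have Wc : (weight (nb (nb x (k,s)) (m,t)) + absz (nb x (k,s) m) = weight (nb x (k,s)) + absz (nb x (k,s) m + sg t)%R)%N := weight_nb (nb x (k,s)) m t.
rewrite nbE in Wc.
have Wz3 : weight (nb x (k, s)) = 3.
  case: (k =P i) => [ki|nki].
    subst k; rewrite hxi in Wz; move: hpi Wz; rewrite /sg /sgo.
    destruct bi, s; move=> H W /=; (by exfalso; apply: H; split) || lia.
  case: (k =P j) => [kj|nkj].
    subst k; rewrite hxj in Wz; move: hpj Wz; rewrite /sg /sgo.
    destruct bj, s; move=> H W /=; (by exfalso; apply: H; split) || lia.
  rewrite hk in Wz; try (by apply/eqP). move: Wz; rewrite /sg; destruct s; move=> /= W; lia.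
case: (m =P k) => [mk|nmk].
  subst m; rewrite eqxx in Wc.
  case: (t =P s) => [ts|nts].
    subst t; left.
    case: (k =P i) => [ki|nki].
      subst k; rewrite hxi in Wc; move: hpi Wc; rewrite /sg /sgo.
      destruct bi, s; move=> H W /=; (by exfalso; apply: H; split) || lia.
    case: (k =P j) => [kj|nkj].
      subst k; rewrite hxj in Wc; move: hpj Wc; rewrite /sg /sgo.
      destruct bj, s; move=> H W /=; (by exfalso; apply: H; split) || lia.
    rewrite hk in Wc; try (by apply/eqP). move: Wc; rewrite /sg; destruct s; move=> /= W; lia.
  exfalso; apply: hne; apply/ffunP => m; rewrite !nbE.
  case: (m =P k) => // _; move: nts; rewrite /sg; destruct s, t; move=> /= H; (by exfalso; apply: H; split) || lia.
have {}Wc : (weight (nb (nb x (k, s)) (m, t)) + `|x m| = 3 + `|(x m + sg t)%R|)%N.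
  by move: Wc; rewrite Wz3; case: eqP.
case: (m =P i) => [mi|nmi].
  subst m; case: (t =P bi) => [->|nt]; first by right; split; [left|move=> E; apply: nmk].
  left; rewrite hxi in Wc; move: nt Wc; rewrite /sg /sgo.
  destruct bi, t; move=> H W /=; (by exfalso; apply: H; split) || lia.
case: (m =P j) => [mj|nmj].
  subst m; case: (t =P bj) => [->|nt]; first by right; split; [right|move=> E; apply: nmk].
  left; rewrite hxj in Wc; move: nt Wc; rewrite /sg /sgo.
  destruct bj, t; move=> H W /=; (by exfalso; apply: H; split) || lia.
left; rewrite hk in Wc; try (by apply/eqP). move: Wc; rewrite /sg; destruct t; move=> /= W; lia.
Qed.

Ltac simpl_eqs :=
  repeat (rewrite ?eqxx; match goal with
  | H : is_true (?a != ?b) |- context [?a == ?b] => rewrite (negbTE H)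
  | H : is_true (?a != ?b) |- context [?b == ?a] => rewrite (eq_sym b a) (negbTE H)
  end); rewrite ?eqxx.

Lemma nbC n (v : vert n) p q : nb (nb v p) q = nb (nb v q) p.
Proof.
case: p => k s; case: q => m t; apply/ffunP => l; rewrite !nbE.
by case: (l == k); case: (l == m); rewrite // -!addrA [(sg s + _)%R]addrC.
Qed.

Lemma nbK n (v : vert n) k s : nb (nb v (k, s)) (k, ~~ s) = v.
Proof.
apply/ffunP => l; rewrite !nbE; case: (l == k) => //.
rewrite /sg; destruct s => /=; lia.
Qed.

Lemma P1 n (x : vert n) (i j : 'I_n) bi bj : i != j -> x i = sgo bi -> x j = sgo bj ->
  (forall l, l != i -> l != j -> x l = 0%R) -> nb (nb x (i,bi)) (j,bj) = zero_word n.
Proof.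
move=> hij hxi hxj hk; apply/ffunP => m; rewrite !nbE !ffunE.
case: (m =P i) => [->|/eqP mi]; first by simpl_eqs; rewrite hxi /sg /sgo; destruct bi; lia.
case: (m =P j) => [->|/eqP mj]; first by simpl_eqs; rewrite hxj /sg /sgo; destruct bj; lia.
by simpl_eqs; rewrite hk.
Qed.

Lemma P3 n (x : vert n) (i j : 'I_n) bi bj (k : 'I_n) s : i != j -> x i = sgo bi -> x j = sgo bj ->
  (forall l, l != i -> l != j -> x l = 0%R) -> k != i -> k != j ->
  nb (nb x (k,s)) (j,bj) = nb (nb (zero_word n) (k,s)) (i, ~~ bi).
Proof.
move=> hij hxi hxj hk hki hkj; apply/ffunP => m; rewrite !nbE !ffunE.
case: (m =P k) => [->|/eqP mk]; first by simpl_eqs; rewrite hk.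
case: (m =P i) => [->|/eqP mi]; first by simpl_eqs; rewrite hxi /sg /sgo; destruct bi; simpl; lia.
case: (m =P j) => [->|/eqP mj]; first by simpl_eqs; rewrite hxj /sg /sgo; destruct bj; lia.
by simpl_eqs; rewrite hk.
Qed.

Lemma inC1_of n (C : code n) v c0 : C c0 -> dist v c0 = 1 -> ~ C v -> inC C 1 v.
Proof.
move=> hc0 hd hv; split; first by exists c0.
move=> c hc; rewrite lt0n; apply/eqP => /dist0 E; subst; contradiction.
Qed.

Lemma sign_of (a : int) : absz a = 1%N -> exists b, a = sgo b.
Proof. move=> h; have [E|E] : a = 1%R \/ a = (-1)%R by lia. by exists false. by exists true. Qed.

Lemma pair_neq (A B : eqType) (k i : A) (s bi : B) : (k, s) != (i, bi) -> ~ (k = i /\ s = bi).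
Proof. by move=> h [E1 E2]; subst; rewrite eqxx in h. Qed.

Theorem mainTheorem3 (n : nat) (C : code n) (rho : nat) (alpha : nat -> nat -> nat) :
  (2 <= n)%N ->
  covering_radius C rho -> (2 <= rho)%N ->
  is_CRC C rho alpha -> r_null alpha 2 ->
  (c_ alpha 1 <= 2)%N -> (3 <= c_ alpha 2)%N ->
  C (zero_word n) ->
  forall x : vert n, type1100 x -> inC C 2 x ->
    exists y : vert n, C y /\ weight y = 4%N /\ in_interval y x.
Proof.
move=> hn _ hrho [hcrc _] hnull hc1 hc2 h0 x [i [j [hij [hi [hj hk]]]]] hx2.
have [bi hxi] := sign_of hi.
have [bj hxj] := sign_of hj.
have hji : j != i by rewrite eq_sym.
have hkji : forall l, l != j -> l != i -> x l = 0%R by move=> l a b; apply: hk.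
have hCx : forall c, C c -> (2 <= dist x c)%N := hx2.2.
have w2 : weight x = 2 by rewrite (weight2 hij hk) hxi hxj /sgo; do 2 case: ifP.
have a0 : forall r, ~ C (nb (zero_word n) r).
  move=> r hr.
  have [S [hS hSP]] := hcrc 0 0 (leq0n _) (leq0n _) _ ((inC0 _ _).2 h0).
  have : r \in S by apply/hSP; apply/inC0.
  have : alpha 0 0 = 0 by apply: (hnull 0).
  by move=> E; move: hS; rewrite E => /eqP; rewrite cards_eq0 => /eqP ->; rewrite inE.
have cnt1 : forall v, inC C 1 v -> exists S : {set 'I_n * bool},
    #|S| = alpha 1 0 /\ forall p, p \in S <-> C (nb v p).
  move=> v hv.
  have [S [hS hSP]] := hcrc 1 0 (ltnW hrho) (leq0n _) v hv.
  exists S; split=> // p; rewrite hSP; exact: inC0.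
have w1 : forall m t, (m = i /\ t = bi) \/ (m = j /\ t = bj) -> inC C 1 (nb x (m, t)).
  move=> m t H; have [q' Hq'] : exists q', nb (nb x (m, t)) q' = zero_word n.
    by case: H => [[-> ->]|[-> ->]]; [exists (j, bj); apply: P1 | exists (i, bi); apply: P1].
  apply: (inC1_of h0); first by rewrite -Hq'; case: q' {Hq'} => ? ?; apply: dist_nb.
  move=> hC; have := hCx _ hC; rewrite dist_nb; lia.
have c1pos : (0 < alpha 1 0)%N.
  have [S [hS hSP]] := cnt1 _ (w1 i bi (or_introl (conj erefl erefl))).
  rewrite -hS; apply/card_gt0P; exists (j, bj); apply/hSP; rewrite (P1 hij) //.
have [Sx [hSx hSxP]] := hcrc 2 1 hrho (ltnW hrho) x hx2.
have : ~~ (Sx \subset [set (i, bi); (j, bj)]).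
  apply/negP => sub; have := subset_leq_card sub; rewrite cards2.
  move: hc2; rewrite /c_ /= -hSx; case: (_ != _) => /=; lia.
case/subsetPn => [[k s]]; move/hSxP => hz1; rewrite !inE negb_or => /andP [hp1 hp2].
move/pair_neq: hp1 => hp1; move/pair_neq: hp2 => hp2.
set z := nb x (k, s).
have [Sz [hSz hSzP]] := cnt1 _ hz1.
have fin : forall m t, C (nb z (m, t)) -> weight (nb z (m, t)) = 4 ->
    exists y : vert n, C y /\ weight y = 4%N /\ in_interval y x.
  move=> m t hc w4; exists (nb z (m, t)); split=> //; split=> //.
  have d2 : dist x (nb z (m, t)) = 2.
    have := hCx _ hc; have := dist_tri x z (nb z (m, t)).
    rewrite /z !dist_nb; lia.
  rewrite /in_interval d2 (dist_sym (zero_word n)) -/(weight x) w2.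
  by rewrite (dist_sym (zero_word n)) -/(weight _) w4.
have nex : forall m t, C (nb z (m, t)) -> nb (nb x (k, s)) (m, t) <> x.
  move=> m t hc E; rewrite /z E in hc; have := hCx _ hc; rewrite dist_refl.
  done.
have [[m t] qS] : exists q, q \in Sz by apply/card_gt0P; rewrite hSz.
have hcq := (hSzP _).1 qS.
have [|[hq km]] := analyze hij hxi hxj hk hp1 hp2 (nex _ _ hcq); first exact: fin.
have c1two : (1 < alpha 1 0)%N.
  have [S [hS hSP]] := cnt1 _ (w1 m t hq).
  rewrite -hS; apply/card_gt1P.
  have [q' [Hq' q'n]] : exists q', nb (nb x (m, t)) q' = zero_word n /\ q' != (k, s).
    case: hq => [[-> ->]|[-> ->]]; [exists (j, bj) | exists (i, bi)];
      (split; [apply: P1 => // | apply/negP => /eqP E]).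
    - by apply: hp2; case: E.
    - by apply: hp1; case: E.
  exists q', (k, s); split => //; apply/hSP; first by rewrite Hq'.
  by rewrite nbC.
have [q2 [q2S q2n]] : exists q2, q2 \in Sz /\ q2 != (m, t).
  have := c1two; rewrite -hSz => /card_gt1P [a [b [aS bS ab]]].
  case: (a =P (m, t)) => [E|/eqP E]; last by exists a.
  by exists b; split=> //; rewrite -E eq_sym.
case: q2 q2S q2n => m2 t2 q2S q2n.
have hcq2 := (hSzP _).1 q2S.
have [|[hq2 km2]] := analyze hij hxi hxj hk hp1 hp2 (nex _ _ hcq2); first exact: fin.
have [hci hcj ki kj] : [/\ C (nb z (i, bi)), C (nb z (j, bj)), k != i & k != j].
  case: hq hq2 q2n => [[E1 E2]|[E1 E2]] [[F1 F2]|[F1 F2]] q2n;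
    move: hcq hcq2 km km2 q2n; rewrite ?E1 ?E2 ?F1 ?F2 => c1 c2 k1 k2 q2n;
    try by rewrite eqxx in q2n.
  - by split=> //; apply/eqP.
  - by split=> //; apply/eqP.
set u := nb (zero_word n) (k, s).
have u1 : inC C 1 u.
  apply: (inC1_of h0 _ (a0 _)); rewrite -[X in dist _ X](nbK (zero_word n) k s).
  exact: dist_nb.
have [Su [hSu hSuP]] := cnt1 _ u1.
have : (2 < #|Su|)%N.
  apply/card_gt2P; exists (k, ~~ s), (i, ~~ bi), (j, ~~ bj); split; last first.
    split; apply/negP => /eqP [E _]; [move: ki | move: hij | move: kj];
      by rewrite E eqxx.
  split; apply/hSuP.
  - by rewrite /u nbK.
  - by rewrite /u -(P3 s hij hxi hxj hk ki kj).
  - by rewrite /u -(P3 s hji hxj hxi hkji kj ki).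
rewrite hSu; move: hc1; rewrite /c_ /=; lia.
Qed.
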